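(* Let $M$ be a strong $r$-helix hypersurface in $E^n$ with unit normal vector field $N$ and space of helix directions $H(M)\subset\mathbb{R}^n$. Let $\alpha: I\subset\mathbb{R}\to M$ be a unit speed (arc-length parametrized) curve on $M$ with Frenet frame $\{V_1,\dots,V_n\}$. Assume that at each $q\in M$ the angle $\theta_j$ between each (unit) $d_j\in H(M)$ and $N$ satisfies $\theta_j\notin\{0,\pi/2\}$. If there exists $d_j\in H(M)$ with $d_j\in\mathrm{Sp}\{V_1,N\}$ along $\alpha$, then $\alpha$ is an asymptotic curve on $M$, i.e. $\langle N',V_1\rangle=0$ along $\alpha$.
   Context: $\langle\cdot,\cdot\rangle$ is the standard inner product on $E^n=\mathbb{R}^n$. For a hypersurface $M\subset\mathbb{R}^n$ with unit normal $N$, a vector $d$ is a helix direction of $M$ if the angle between $d$ and $T_pM$ is the same for all $p\in M$, equivalently $\langle N,d\rangle$ is constant on $M$. $H(M)$ is the set of helix directions; $M$ is a strong $r$-helix if $H(M)$ is an $r$-dimensional linear subspace. $V_1=\alpha'$ is the unit tangent of $\alpha$ (first vector of its Frenet frame). $N'$ denotes the derivative of $N|_{\alpha(s)}$ with respect to $s$. A curve on $M$ is asymptotic if $\langle N',\alpha'\rangle=0$ along it (its normal curvature vanishes). $\mathrm{Sp}\{u,v\}$ is the linear span. *)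

(* Defs.v *)
From HB Require Import structures.
From mathcomp Require Import all_boot all_order all_algebra.
From mathcomp Require Import all_classical all_reals all_analysis.
Set Implicit Arguments. Unset Strict Implicit. Unset Printing Implicit Defensive.
Import Order.TTheory GRing.Theory Num.Theory.
Import numFieldNormedType.Exports.
Local Open Scope ring_scope.
Local Open Scope classical_set_scope.

Section Defs.
Variables (R : realType) (n : nat).

Definition dotv (u v : 'rV[R]_n) : R := (u *m v^T) ord0 ord0.

Definition curve_derivable (c : R -> 'rV[R]_n) (t : R) : Prop :=
  forall i : 'I_n, derivable (fun s => c s ord0 i) t 1.
Definition vel (c : R -> 'rV[R]_n) (t : R) : 'rV[R]_n :=
  \row_i ((fun s => c s ord0 i)^`() t).

Definition tangent_vec (M : set 'rV[R]_n) (p v : 'rV[R]_n) : Prop :=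
  exists (g : R -> 'rV[R]_n) (t0 : R),
    (\forall t \near t0, M (g t)) /\ g t0 = p /\ curve_derivable g t0 /\
    vel g t0 = v.

(* M is a hypersurface with (smooth) unit normal field N:
   N p is a unit vector, T_pM is exactly the orthogonal complement of N p,
   and N is differentiable along differentiable curves of M. *)
Definition hypersurface_with_normal (M : set 'rV[R]_n)
    (N : 'rV[R]_n -> 'rV[R]_n) : Prop :=
  [/\ forall p, M p -> dotv (N p) (N p) = 1,
      forall p v, M p -> (tangent_vec M p v <-> dotv (N p) v = 0) &
      forall (g : R -> 'rV[R]_n) t0, (\forall t \near t0, M (g t)) ->
        curve_derivable g t0 -> curve_derivable (N \o g) t0].

Definition helix_dir (M : set 'rV[R]_n) (N : 'rV[R]_n -> 'rV[R]_n)
    (d : 'rV[R]_n) : Prop :=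
  exists c : R, forall p, M p -> dotv (N p) d = c.

Definition strong_helix (M : set 'rV[R]_n) (N : 'rV[R]_n -> 'rV[R]_n)
    (r : nat) : Prop :=
  exists U : 'M[R]_n, \rank U = r /\
    forall d : 'rV[R]_n, helix_dir M N d <-> (d <= U)%MS.

Definition angle (u v : 'rV[R]_n) : R := acos (dotv u v).

End Defs.

(* Main.v *)
Require Import Defs.
From HB Require Import structures.
From mathcomp Require Import all_boot all_order all_algebra.
From mathcomp Require Import all_classical all_reals all_analysis.
From mathcomp Require Import ring lra.
Import Order.TTheory GRing.Theory Num.Theory.
Import numFieldNormedType.Exports.
Local Open Scope ring_scope.
Local Open Scope classical_set_scope.

Lemma dotvE (R : realType) n (u v : 'rV[R]_n) :
  dotv u v = \sum_i u ord0 i * v ord0 i.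
Proof. by rewrite /dotv !mxE; apply: eq_bigr => i _; rewrite mxE. Qed.

Lemma deriv_locconst (R : realType) (F : R -> R) (s df c : R) :
  is_derive s 1 F df -> (\forall t \near s, F t = c) -> df = 0.
Proof.
move=> hF hc.
have h2 : is_derive s (1:R) (cst c) df.
  apply: near_eq_is_derive hF; near=> t; rewrite (near hc t) //.
by rewrite -(@derive_val _ _ _ _ _ _ _ h2) derive_cst.
Unshelve. all: by end_near.
Qed.

Arguments deriv_locconst {R F s df} c _ _.

Lemma is_derive_lin (R : realType) m (h : 'I_m -> R -> R) (dh k : 'I_m -> R) (s : R) :
  (forall i, is_derive s 1 (h i) (dh i)) ->
  is_derive s 1 (fun t => \sum_i k i * h i t) (\sum_i k i * dh i).
Proof.
move=> H.
have -> : (fun t => \sum_i k i * h i t) = \sum_i (k i \*: h i).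
  by rewrite fct_sumE.
by apply: is_derive_sum => i; apply: is_deriveZ.
Qed.

Arguments is_derive_lin {R m h dh} k {s} _.

Lemma is_derive_sq (R : realType) m (h : 'I_m -> R -> R) (dh : 'I_m -> R) (s : R) :
  (forall i, is_derive s 1 (h i) (dh i)) ->
  is_derive s 1 (fun t => \sum_i h i t * h i t)
     (\sum_i (h i s * dh i + h i s * dh i)).
Proof.
move=> H.
have -> : (fun t => \sum_i h i t * h i t) = \sum_i (h i * h i).
  by rewrite fct_sumE.
by apply: is_derive_sum => i; apply: is_deriveM.
Qed.

Arguments is_derive_sq {R m h dh s} _.

Theorem theorem3p6 (R : realType) (n r : nat)
  (M : set 'rV[R]_n) (N : 'rV[R]_n -> 'rV[R]_n)
  (I : set R) (alpha : R -> 'rV[R]_n) :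
  hypersurface_with_normal M N ->
  strong_helix M N r ->
  (forall d, helix_dir M N d -> dotv d d = 1 ->
     forall q, M q -> angle d (N q) <> 0 /\ angle d (N q) <> pi / 2) ->
  is_interval I -> open I ->
  (forall s, I s -> M (alpha s)) ->
  (forall s, I s -> curve_derivable alpha s) ->
  (forall s, I s -> dotv (vel alpha s) (vel alpha s) = 1) ->
  (exists d, helix_dir M N d /\ dotv d d = 1 /\
     forall s, I s -> exists a b : R,
       d = a *: vel alpha s + b *: N (alpha s)) ->
  forall s, I s -> dotv (vel (N \o alpha) s) (vel alpha s) = 0.
Proof.
move=> [Hunit Htan HNder] _ _ _ Iopen Ialpha Ider _ [d [[c Hc] [dd Hsp]]] s Is.
have nI : \forall t \near s, I t by apply: open_nbhs_nbhs; split.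
have nM : \forall t \near s, M (alpha t).
  by apply: filterS nI => t; apply: Ialpha.
have Nder := HNder alpha s nM (Ider s Is).
set W := vel (N \o alpha) s.
set V := vel alpha s.
set N0 := N (alpha s).
have gd : forall i, is_derive s 1 (fun t => (N \o alpha) t ord0 i) (W ord0 i).
  move=> i; rewrite /W /vel mxE derive1E; apply: derivableP; exact: Nder i.
have F1 : \sum_i d ord0 i * W ord0 i = 0.
  apply: (deriv_locconst c (is_derive_lin (fun i => d ord0 i) gd)).
  apply: filterS nM => t Mt; rewrite -(Hc _ Mt) dotvE.
  by apply: eq_bigr => i _; rewrite mulrC.
have F2 : \sum_i N0 ord0 i * W ord0 i = 0.
  have := deriv_locconst 1 (is_derive_sq gd).
  have -> : \sum_i ((N \o alpha) s ord0 i * W ord0 i + (N \o alpha) s ord0 i * W ord0 i)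
     = 2 * \sum_i N0 ord0 i * W ord0 i.
    by rewrite mulr_sumr; apply: eq_bigr => i _; rewrite /N0 /=; ring.
  move=> H; have : 2 * \sum_i N0 ord0 i * W ord0 i = 0.
    apply: H; apply: filterS nM => t Mt; rewrite -(Hunit _ Mt) dotvE //.
  by move/eqP; rewrite mulf_eq0 pnatr_eq0 /= => /eqP.
have [a [b Hd]] := Hsp s Is.
have F3 : a * dotv W V = 0.
  have E : \sum_i d ord0 i * W ord0 i =
      a * \sum_i W ord0 i * V ord0 i + b * \sum_i N0 ord0 i * W ord0 i.
    rewrite Hd !mulr_sumr -big_split /=.
    by apply: eq_bigr => i _; rewrite !mxE /N0 /V; ring.
  by move: E; rewrite F1 F2 mulr0 addr0 dotvE => <-.
have [a0|an0] := eqVneq a 0; last first.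
  by move/eqP: F3; rewrite mulf_eq0 (negPf an0) /= => /eqP.
(* a = 0 : N is constant on M *)
have dbN : d = b *: N0 by rewrite Hd a0 scale0r add0r.
have cb : c = b.
  by rewrite -(Hc _ (Ialpha s Is)) -/N0 dbN dotvE -[RHS]mulr1 -(Hunit _ (Ialpha s Is))
    dotvE mulr_sumr; apply: eq_bigr => i _; rewrite mxE; ring.
have bb : b * b = 1.
  have E : dotv d d = b * b * dotv N0 N0.
    by rewrite dbN !dotvE mulr_sumr; apply: eq_bigr => i _; rewrite !mxE; ring.
  by move: E; rewrite dd Hunit ?mulr1 //; apply: Ialpha.
have Nconst : forall p, M p -> forall i, N p ord0 i = b * d ord0 i.
  move=> p Mp.
  have S0 : \sum_i (N p ord0 i - b * d ord0 i) ^+ 2 = 0.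
    have E : \sum_i (N p ord0 i - b * d ord0 i) ^+ 2 =
      dotv (N p) (N p) - 2 * b * dotv (N p) d + b * b * dotv d d.
      rewrite !dotvE !mulr_sumr -sumrB -big_split /=.
      by apply: eq_bigr => i _; ring.
    by rewrite E Hunit // Hc // dd cb mulr1 -mulrA bb; ring.
  move=> i; apply/eqP; rewrite -subr_eq0 -sqrf_eq0; apply/eqP.
  by apply: (psumr_eq0P _ S0) => // j _; exact: sqr_ge0.
have W0 : forall i, W ord0 i = 0.
  move=> i; apply: (deriv_locconst (b * d ord0 i) (gd i)).
  by apply: filterS nM => t Mt; rewrite /= Nconst.
by rewrite dotvE big1 // => i _; rewrite W0 mul0r.
Qed.
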